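(* Let $n = 2g+2$ for an integer $g\ge 0$, and let $\mathcal{J}[2]$ be the $S_n$-module of subsets of $\{1,\dots,n\}$ modulo complements, with group law induced by symmetric difference and $S_n$ acting by permuting $\{1,\dots,n\}$. Then $H^1_*(S_n,\mathcal{J}[2]) = 0$.
   Context: For a finite group $G$ and $G$-module $M$, $H^1_*(G,M) := \ker\big(H^1(G,M)\to\prod_{g\in G}H^1(\langle g\rangle,M)\big)$, the map being the product of restrictions to cyclic subgroups. *)

(* Defs.v *)
From mathcomp Require Import all_boot all_fingroup.
Set Implicit Arguments. Unset Strict Implicit. Unset Printing Implicit Defensive.

(* An element of J[2] is represented by any subset A : {set 'I_n}; two
   representatives denote the same element iff they are equal or complementary. *)

Section J2.
Variable n : nat.

Definition symdiff (A B : {set 'I_n}) : {set 'I_n} := (A :\: B) :|: (B :\: A).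

Definition J2eq (A B : {set 'I_n}) : bool := (A == B) || (A == ~: B).

(* MathComp composes permutations left-to-right ((s * t) x = t (s x)),
   so this is a right action: act (act A s) t = act A (s * t). *)
Definition J2act (A : {set 'I_n}) (s : {perm 'I_n}) : {set 'I_n} := s @: A.

Definition J2cocycle (G : {set {perm 'I_n}}) (f : {perm 'I_n} -> {set 'I_n}) : Prop :=
  forall s t, s \in G -> t \in G ->
    J2eq (f (s * t)%g) (symdiff (J2act (f s) t) (f t)).

Definition J2coboundary_on (H : {set {perm 'I_n}}) (f : {perm 'I_n} -> {set 'I_n}) : Prop :=
  exists A : {set 'I_n}, forall h, h \in H -> J2eq (f h) (symdiff (J2act A h) A).

Definition H1star_J2_trivial (G : {set {perm 'I_n}}) : Prop :=
  forall f : {perm 'I_n} -> {set 'I_n},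
    J2cocycle G f ->
    (forall g, g \in G -> J2coboundary_on <[g]>%g f) ->
    J2coboundary_on G f.

End J2.

(* Main.v *)
Require Import Defs.
From mathcomp Require Import all_boot all_fingroup.
Set Implicit Arguments. Unset Strict Implicit. Unset Printing Implicit Defensive.

Section Aux.
Variable n : nat.
Implicit Types A B C : {set 'I_n}.

Lemma in_symdiff A B x : (x \in symdiff A B) = (x \in A) (+) (x \in B).
Proof. by rewrite /symdiff !inE; case: (x \in A); case: (x \in B). Qed.

Lemma in_act A (s : {perm 'I_n}) x : (x \in J2act A s) = ((s^-1)%g x \in A).
Proof.
rewrite /J2act; apply/imsetP/idP => [[y yA ->]|H]; first by rewrite permK.
by exists ((s^-1)%g x) => //; rewrite permKV.
Qed.

Lemma J2eqP A B :
  reflect (exists b, forall x, (x \in A) = (x \in B) (+) b) (J2eq A B).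
Proof.
apply: (iffP orP) => [[/eqP->|/eqP->]|[[] H]].
- by exists false => x; rewrite addbF.
- by exists true => x; rewrite addbT inE.
- by right; apply/eqP/setP => x; rewrite H addbT inE.
- by left; apply/eqP/setP => x; rewrite H addbF.
Qed.

Lemma J2eq_refl A : J2eq A A.
Proof. by apply/J2eqP; exists false => x; rewrite addbF. Qed.

Lemma J2eq_sym A B : J2eq A B -> J2eq B A.
Proof.
move/J2eqP=> [b H]; apply/J2eqP; exists b => x.
by rewrite H -addbA addbb addbF.
Qed.

Lemma J2eq_trans A B C : J2eq A B -> J2eq B C -> J2eq A C.
Proof.
move/J2eqP=> [b H] /J2eqP [c K]; apply/J2eqP; exists (c (+) b) => x.
by rewrite H K addbA.
Qed.

Lemma J2eq_symdiff A A' B B' :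
  J2eq A A' -> J2eq B B' -> J2eq (symdiff A B) (symdiff A' B').
Proof.
move/J2eqP=> [b H] /J2eqP [c K]; apply/J2eqP; exists (b (+) c) => x.
rewrite !in_symdiff H K.
by case: (x \in A'); case: (x \in B'); case: b {H}; case: c {K}.
Qed.

Lemma J2eq_act A A' s : J2eq A A' -> J2eq (J2act A s) (J2act A' s).
Proof.
move/J2eqP=> [b H]; apply/J2eqP; exists b => x.
by rewrite !in_act H.
Qed.

Definition cob A (s : {perm 'I_n}) := symdiff (J2act A s) A.

Lemma cob_cocycle A s t :
  cob A (s * t)%g = symdiff (J2act (cob A s) t) (cob A t).
Proof.
apply/setP => x; rewrite /cob !(in_symdiff, in_act) invMg permM.
by case: (_ \in A); case: (_ \in A); case: (_ \in A).
Qed.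

Lemma main (x0 : 'I_n) : H1star_J2_trivial [set: {perm 'I_n}].
Proof.
move=> f fco fcyc.
pose A := [set i | (i != x0) && ~~ J2eq (f (tperm x0 i)) set0].
exists A => h _.
pose S := [pred s | J2eq (f s) (cob A s)].
have Smul : forall s t, s \in S -> t \in S -> (s * t)%g \in S.
  move=> s t; rewrite !inE => Hs Ht.
  apply: J2eq_trans (fco s t (in_setT _) (in_setT _)) _.
  rewrite /= cob_cocycle.
  by apply: J2eq_symdiff => //; apply: J2eq_act.
have Sstar : forall i, tperm x0 i \in S.
  move=> i; rewrite inE.
  have [<-|ni] := eqVneq x0 i.
    rewrite tperm1.
    have := fco 1%g 1%g (in_setT _) (in_setT _); rewrite mulg1 => H1.
    apply/J2eqP; have /J2eqP [b Hb] := H1; exists b => x.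
    rewrite Hb /cob !in_symdiff !in_act invg1 perm1.
    by case: (x \in f 1%g); case: (x \in A).
  have [B HB] := fcyc (tperm x0 i) (in_setT _).
  have := HB (tperm x0 i) (cycle_id _).
  rewrite /cob => /J2eqP [b Hb].
  have A0 : x0 \notin A by rewrite inE eqxx.
  have Hf : forall x, (x \in f (tperm x0 i)) =
      ((x == x0) || (x == i)) && ((x0 \in B) (+) (i \in B)) (+) b.
    move=> x; rewrite Hb in_symdiff in_act tpermV.
    case: tpermP => [->|->|/eqP a /eqP c]; rewrite ?eqxx ?orbT //=.
    + by rewrite (addbC (i \in B)).
    + by rewrite (negbTE a) (negbTE c) addbb.
  have Hg : forall x, (x \in symdiff (J2act A (tperm x0 i)) A) =
      ((x == x0) || (x == i)) && (i \in A).
    move=> x; rewrite in_symdiff in_act tpermV.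
    case: tpermP => [->|->|/eqP a /eqP c]; rewrite ?eqxx ?orbT //=.
    all: try by rewrite (negbTE A0) ?addbF.
    all: try by rewrite (negbTE a) (negbTE c) addbb.
  case E : ((x0 \in B) (+) (i \in B)).
  - have HD : J2eq (f (tperm x0 i)) [set x | (x == x0) || (x == i)].
      by apply/J2eqP; exists b => x; rewrite Hf E inE andbT.
    have [Hz|Hz] := boolP (J2eq (f (tperm x0 i)) set0).
      have iA : i \notin A by rewrite inE Hz andbF.
      apply: J2eq_trans Hz _; apply/J2eqP; exists false => x.
      by rewrite Hg (negbTE iA) andbF inE.
    have iA : i \in A by rewrite inE eq_sym ni Hz.
    apply: J2eq_trans HD _; apply/J2eqP; exists false => x.
    by rewrite Hg iA andbT inE addbF.
  - have Hz : J2eq (f (tperm x0 i)) set0.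
      by apply/J2eqP; exists b => x; rewrite Hf E andbF inE.
    have iA : i \notin A by rewrite inE Hz andbF.
    apply: J2eq_trans Hz _; apply/J2eqP; exists false => x.
    by rewrite Hg (negbTE iA) andbF inE.
have Stp : forall i j, i != j -> tperm i j \in S.
  move=> i j nij.
  have [->|ni] := eqVneq i x0; first exact: Sstar.
  have [->|nj] := eqVneq j x0; first by rewrite tpermC; exact: Sstar.
  have -> : tperm i j = (tperm x0 i * tperm x0 j * tperm x0 i)%g.
    rewrite -(tpermJ_tperm (x := x0) (y := i) (z := j)).
    - by rewrite conjgE tpermV mulgA.
    - by rewrite eq_sym.
    - exact: nij.
  by apply: (Smul); [apply: (Smul)|]; apply: (Sstar).
have S1 : (1%g : {perm 'I_n}) \in S.
  by rewrite -(tperm1 x0); apply: Sstar.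
have [ts -> dts] := prod_tpermP h.
have : (\prod_(t <- ts) tperm t.1 t.2)%g \in S; last by rewrite inE.
elim: ts dts => [|t ts IH] /=; first by rewrite big_nil.
move=> /andP [dt dts]; rewrite big_cons; apply: (Smul); last exact: IH.
by apply: (Stp).
Qed.
End Aux.

Theorem lemma2 (g : nat) :
  H1star_J2_trivial [set: {perm 'I_(2 * g + 2)}].
Proof.
have lt0 : 0 < 2 * g + 2 by rewrite addn2.
exact: (main (Ordinal lt0)).
Qed.
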